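(* Let $n\geq 2$ be an integer and let $D\subset\{0,1,\ldots,n^2\}$ be such that $\Delta:=D-D$ is sparse. Let $k\geq1$ and let $(\delta_1,\ldots,\delta_k),(\delta_1',\ldots,\delta_k')\in\Delta^k$ with $\delta_j\neq\delta_j'$ for some $1\le j\le k$. Then the $k$-tiles $\mathcal{E}_{\delta_1,\ldots,\delta_k}$ and $\mathcal{E}_{\delta_1',\ldots,\delta_k'}$ of $\mathcal{E}_n$ are disjoint.
   Context: Let $b:=-n+i$. $\mathcal{E}_n$ is the attractor of $\{z\mapsto b^{-1}(z+\delta): \delta\in\{0,\pm1,\ldots,\pm n^2\}\}$, i.e. $\mathcal{E}_n=\{\sum_{j\ge1}\delta_jb^{-j}: \delta_j\in\{-n^2,\ldots,n^2\}\}$. For $\delta_1,\ldots,\delta_k\in\{-n^2,\ldots,n^2\}$, the $k$-tile $\mathcal{E}_{\delta_1,\ldots,\delta_k}$ is $\{\sum_{j=1}^k\delta_jb^{-j}+b^{-k}e: e\in\mathcal{E}_n\}$. $\Delta$ is called sparse if for all $\delta\neq\delta'$ in $\Delta$, $|\delta-\delta'|>2$ when $n\geq5$, and $|\delta-\delta'|>3$ when $n\in\{2,3,4\}$. *)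

(* Defs.v *)
From Stdlib Require Import Reals ZArith List Lia.
From Coquelicot Require Import Coquelicot.
Open Scope R_scope.

Definition base (n : nat) : C := (- INR n, 1)%R.

Definition binvpow (n j : nat) : C := Cinv (Cpow (base n) j).

Definition digit (n : nat) (d : Z) : Prop :=
  (- Z.of_nat (n * n) <= d <= Z.of_nat (n * n))%Z.

Definition in_En (n : nat) (z : C) : Prop :=
  exists d : nat -> Z, (forall j, digit n (d j)) /\
    is_series (fun j : nat => Cmult (RtoC (IZR (d j))) (binvpow n (S j))) z.

Fixpoint csum (f : nat -> C) (k : nat) : C :=
  match k with
  | O => RtoC 0
  | S k' => Cplus (csum f k') (f k')
  end.

(* the k-tile E_{δ_1,...,δ_k}, with ds = [δ_1; ...; δ_k] and k = length ds *)
Definition in_tile (n : nat) (ds : list Z) (z : C) : Prop :=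
  exists e : C, in_En n e /\
    z = Cplus (csum (fun j => Cmult (RtoC (IZR (nth j ds 0%Z))) (binvpow n (S j)))
                    (length ds))
              (Cmult (binvpow n (length ds)) e).

Definition diffset (D : Z -> Prop) (x : Z) : Prop :=
  exists a b : Z, D a /\ D b /\ x = (a - b)%Z.

Definition sparse (n : nat) (Delta : Z -> Prop) : Prop :=
  forall d d' : Z, Delta d -> Delta d' -> d <> d' ->
    ((5 <= n)%nat -> (Z.abs (d - d') > 2)%Z) /\
    ((2 <= n <= 4)%nat -> (Z.abs (d - d') > 3)%Z).

(* Main.v *)
Require Import Defs.
From Stdlib Require Import Reals ZArith List Lia Lra Psatz.
From Coquelicot Require Import Coquelicot.
From Stdlib Require Classical_Prop.
Open Scope R_scope.
Definition lam (Kc x : C) : R := Im (Cmult Kc x).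
Fixpoint rsum (f : nat -> R) (k : nat) : R :=
  match k with O => 0 | S k' => rsum f k' + f k' end.

Lemma rsum_ext f g k : (forall j, f j = g j) -> rsum f k = rsum g k.
Proof. intros H; induction k; simpl; [reflexivity|]. rewrite IHk, H. reflexivity. Qed.

Lemma lam_plus Kc x y : lam Kc (Cplus x y) = lam Kc x + lam Kc y.
Proof. destruct Kc, x, y; unfold lam, Im, Cmult, Cplus; simpl; ring. Qed.
Lemma lam_scal Kc (r : R) y : lam Kc (Cmult (RtoC r) y) = r * lam Kc y.
Proof. destruct Kc, y; unfold lam, Im, Cmult, RtoC; simpl; ring. Qed.
Lemma lam_0 Kc : lam Kc (RtoC 0) = 0.
Proof. destruct Kc; unfold lam, Im, Cmult, RtoC; simpl; ring. Qed.
Lemma lam_assoc Kc x y : lam Kc (Cmult x y) = lam (Cmult Kc x) y.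
Proof. unfold lam. f_equal. destruct Kc, x, y; unfold Cmult; simpl; f_equal; ring. Qed.
Lemma lam_csum Kc f k : lam Kc (csum f k) = rsum (fun j => lam Kc (f j)) k.
Proof. induction k; simpl. apply lam_0. rewrite lam_plus, IHk. reflexivity. Qed.
Lemma lam_sum_n Kc (a : nat -> C) N : lam Kc (@sum_n C_AbelianMonoid a N) = rsum (fun l => lam Kc (a l)) (S N).
Proof. induction N. rewrite sum_O. simpl. ring.
  rewrite sum_Sn. change (lam Kc (Cplus (@sum_n C_AbelianMonoid a N) (a (S N))) = rsum (fun l => lam Kc (a l)) (S (S N))).
  rewrite lam_plus, IHN. reflexivity. Qed.

Lemma base_nz n : base n <> RtoC 0.
Proof. unfold base, RtoC. intros H. injection H. lra. Qed.

Definition vv n := Cinv (base n).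
Lemma binvpow_eq n j : binvpow n j = Cpow (vv n) j.
Proof. unfold binvpow, vv. rewrite Cpow_inv. reflexivity. apply base_nz. Qed.
Lemma C_ball_R (x y : C) (eps : R) :
  @ball (NormedModule.UniformSpace C_AbsRing C_NormedModule) x eps y ->
  Rabs (fst y - fst x) < eps /\ Rabs (snd y - snd x) < eps.
Proof. intros [H1 H2]. split; [exact H1 | exact H2]. Qed.

Lemma series_lam (Kc : C) (a : nat -> C) (e : C) :
  is_series a e -> is_lim_seq (fun N => lam Kc (sum_n a N)) (lam Kc e).
Proof.
  intros H. apply is_lim_seq_spec. intros eps.
  set (M := Rabs (fst Kc) + Rabs (snd Kc) + 1).
  assert (HM : 0 < M) by (unfold M; pose proof (Rabs_pos (fst Kc)); pose proof (Rabs_pos (snd Kc)); lra).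
  assert (Hd : 0 < eps / M) by (apply Rdiv_lt_0_compat; [apply cond_pos|lra]).
  unfold is_series in H. pose proof (proj1 (@filterlim_locally nat (NormedModule.UniformSpace C_AbsRing C_NormedModule) eventually _ (sum_n a) e) H) as H0. clear H. rename H0 into H.
  specialize (H (mkposreal _ Hd)).
  revert H. apply filter_imp. intros N HN.
  set (s := sum_n a N) in *. clearbody s.
  apply C_ball_R in HN. destruct HN as [H1 H2].
  destruct Kc as [k1 k2]; destruct s as [s1 s2]; destruct e as [e1 e2]. unfold lam, Im, Cmult. simpl in *.
  replace (k1 * s2 + k2 * s1 - (k1 * e2 + k2 * e1)) with (k1 * (s2 - e2) + k2 * (s1 - e1)) by ring.
  eapply Rle_lt_trans. apply Rabs_triang. rewrite !Rabs_mult.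
  assert (eps / M * M = eps) by (field; lra).
  pose proof (Rabs_pos k1). pose proof (Rabs_pos k2).
  pose proof (Rabs_pos (s2 - e2)). pose proof (Rabs_pos (s1 - e1)).
  assert (Rabs k1 * Rabs (s2 - e2) <= Rabs k1 * (eps/M)) by (apply Rmult_le_compat_l; lra).
  assert (Rabs k2 * Rabs (s1 - e1) <= Rabs k2 * (eps/M)) by (apply Rmult_le_compat_l; lra).
  unfold M in *. nra.
Qed.

Lemma tile_lim n ds z Kc : in_tile n ds z -> exists d : nat -> Z, (forall l, digit n (d l)) /\
  is_lim_seq (fun N => rsum (fun l => IZR (d l) * lam Kc (Cpow (vv n) (length ds + S l))) (S N))
    (lam Kc z - rsum (fun j => IZR (nth j ds 0%Z) * lam Kc (Cpow (vv n) (S j))) (length ds)).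
Proof.
  intros [e [[d [Hd Hs]] Hz]]. exists d. split; [exact Hd|].
  pose proof (series_lam (Cmult Kc (Cpow (vv n) (length ds))) _ _ Hs) as L.
  eapply is_lim_seq_ext; [|replace (lam Kc z - _) with (lam (Cmult Kc (Cpow (vv n) (length ds))) e); [exact L|]].
  - intros N. cbv beta. rewrite lam_sum_n.
    assert (E : forall l, lam (Cmult Kc (Cpow (vv n) (length ds))) (Cmult (RtoC (IZR (d l))) (binvpow n (S l)))
       = IZR (d l) * lam Kc (Cpow (vv n) (length ds + S l))).
    { intros l. rewrite lam_scal, binvpow_eq, <- lam_assoc, Cpow_add_r. reflexivity. }
    apply rsum_ext. exact E.
  - rewrite Hz, lam_plus, lam_csum, binvpow_eq, lam_assoc.
    assert (E : forall j, lam Kc (Cmult (RtoC (IZR (nth j ds 0%Z))) (binvpow n (S j))) = IZR (nth j ds 0%Z) * lam Kc (Cpow (vv n) (S j))).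
    { intros j. rewrite lam_scal, binvpow_eq. reflexivity. }
    assert (rsum (fun j => lam Kc (Cmult (RtoC (IZR (nth j ds 0%Z))) (binvpow n (S j)))) (length ds) = rsum (fun j => IZR (nth j ds 0%Z) * lam Kc (Cpow (vv n) (S j))) (length ds)).
    { apply rsum_ext. exact E. }
    rewrite H. ring.
Qed.

Lemma rsum_split f a t : rsum f (a + t) = rsum f a + rsum (fun l => f (a + l)%nat) t.
Proof. induction t; simpl. rewrite Nat.add_0_r. ring. rewrite Nat.add_succ_r. simpl. rewrite IHt. ring. Qed.

Lemma rsum_S f a : rsum f (S a) = rsum f a + f a.
Proof. reflexivity. Qed.

Lemma rsum_zero f a : (forall j, (j < a)%nat -> f j = 0) -> rsum f a = 0.
Proof. intros H; induction a; simpl; [reflexivity|]. rewrite IHa by (intros; apply H; lia). rewrite H by lia. ring. Qed.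

Section Core.
Variables (v Kc : C) (Phi : C -> R) (K G : R).
Hypothesis HK : 0 < K.
Hypothesis HG : 0 <= G.
Hypothesis Hinv : forall w, K * Rabs (Im w) + Phi (Cmult w v) <= Phi w.
Hypothesis Hpos : forall w, 0 <= Phi w.
Let W i := Cmult Kc (Cpow v i).

Lemma W_S i : W (S i) = Cmult (W i) v.
Proof. unfold W. rewrite Cpow_S. destruct Kc, v, (Cpow v i). unfold Cmult; simpl. f_equal; ring. Qed.

Lemma tail_bound g s N : (forall l, Rabs (g l) <= G) ->
  K * Rabs (rsum (fun l => g l * Im (W (s + l)%nat)) N) + G * Phi (W (s + N)%nat) <= G * Phi (W s).
Proof.
  intros Hg. induction N; cbn [rsum]; cbv beta.
  - rewrite Nat.add_0_r, Rabs_R0. lra.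
  - rewrite Nat.add_succ_r, W_S.
    pose proof (Hinv (W (s + N)%nat)) as Hi.
    set (I := Im (W (s + N)%nat)) in *. set (A := rsum (fun l => g l * Im (W (s + l)%nat)) N) in *.
    pose proof (Rabs_triang A (g N * I)). rewrite Rabs_mult in H.
    pose proof (Hg N). pose proof (Rabs_pos I). pose proof (Rabs_pos (g N)).
    assert (Rabs (g N) * Rabs I <= G * Rabs I) by (apply Rmult_le_compat_r; lra).
    assert (G * (K * Rabs I + Phi (Cmult (W (s + N)%nat) v)) <= G * Phi (W (s+N)%nat)) by (apply Rmult_le_compat_l; lra).
    assert (K * Rabs (A + g N * I) <= K * (Rabs A + G * Rabs I)) by (apply Rmult_le_compat_l; lra).
    nra.
Qed.

Lemma core (c : C) (k j0 : nat) (eps g : nat -> R) (L : R) :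
  W (S j0) = c -> (j0 < k)%nat ->
  (forall j, (j < j0)%nat -> eps j = 0) -> (forall j, Rabs (eps j) <= G) -> (forall l, Rabs (g l) <= G) ->
  is_lim_seq (fun N => rsum (fun l => g l * Im (W (S k + l)%nat)) (S N)) L ->
  L = rsum (fun j => eps j * Im (W (S j))) k ->
  K * (Rabs (eps j0) * Rabs (Im c)) <= G * Phi (Cmult c v).
Proof.
  intros Hc Hk H0 He Hg Hl HL.
  assert (HLb : K * Rabs L <= G * Phi (W (S k))).
  { assert (B : forall N, K * Rabs (rsum (fun l => g l * Im (W (S k + l)%nat)) (S N)) <= G * Phi (W (S k))).
    { intros N. pose proof (tail_bound g (S k) (S N) Hg). pose proof (Hpos (W (S k + S N)%nat)).
      assert (0 <= G * Phi (W (S k + S N)%nat)) by (apply Rmult_le_pos; lra). lra. }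
    apply is_lim_seq_abs in Hl. apply (is_lim_seq_scal_l _ K) in Hl.
    pose proof (is_lim_seq_le _ _ _ _ B Hl (is_lim_seq_const (G * Phi (W (S k))))) as X.
    simpl in X. exact X. }
  destruct (Nat.le_exists_sub (S j0) k) as [t [Ht _]]; [lia|].
  rewrite Nat.add_comm in Ht. subst k.
  rewrite rsum_split, rsum_S in HL. cbv beta in HL. rewrite rsum_zero in HL by (intros; rewrite H0 by lia; ring).
  rewrite Hc in HL.
  pose proof (tail_bound (fun l => eps (S j0 + l)%nat) (S (S j0)) t (fun l => He _)) as T.
  cbv beta in T. rewrite (W_S (S j0)), Hc in T.
  set (R0 := rsum _ t) in HL.
  assert (T' : K * Rabs R0 + G * Phi (W (S (S j0 + t))) <= G * Phi (Cmult c v)) by exact T.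
  clear T.
  assert (eps j0 * Im c = L - R0) by lra.
  rewrite <- Rabs_mult, H.
  pose proof (Rabs_triang L (- R0)). rewrite Rabs_Ropp in H1.
  assert (K * Rabs (L - R0) <= K * (Rabs L + Rabs R0)). { apply Rmult_le_compat_l. lra. unfold Rminus. exact H1. }
  lra.
Qed.
End Core.

Definition xr n := INR n.
Definition qq n := xr n * xr n + 1.
Definition pp n := xr n * xr n - xr n + 1.
Definition KK n := (pp n * pp n - 1) / qq n.
Definition Phi1 n (w : C) := Rabs (fst w) + pp n * Rabs (snd w).

Lemma Rabs_div_pos a q : 0 < q -> Rabs (a / q) = Rabs a / q.
Proof. intros Hq. unfold Rdiv. rewrite Rabs_mult, Rabs_inv, (Rabs_pos_eq q) by lra. reflexivity. Qed.

Lemma pp_pos n : (1 <= n)%nat -> 1 <= pp n.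
Proof. intros H. apply le_INR in H. unfold pp, xr. simpl in H. nra. Qed.

Lemma inv1 n : (1 <= n)%nat -> forall w, KK n * Rabs (Im w) + Phi1 n (Cmult w (vv n)) <= Phi1 n w.
Proof.
  intros Hn [w1 w2]. pose proof (pp_pos n Hn) as Hp.
  assert (Hx : 1 <= xr n) by (apply le_INR in Hn; exact Hn).
  assert (Hq : 0 < qq n) by (unfold qq; nra).
  assert (E1 : fst (Cmult (w1, w2) (vv n)) = (w2 - xr n * w1) / qq n).
  { unfold Cmult, vv, Cinv, base, qq, xr; simpl. field. nra. }
  assert (E2 : snd (Cmult (w1, w2) (vv n)) = - (w1 + xr n * w2) / qq n).
  { unfold Cmult, vv, Cinv, base, qq, xr; simpl. field. nra. }
  unfold Phi1. rewrite E1, E2, !Rabs_div_pos by exact Hq. unfold Im; simpl.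
  rewrite Rabs_Ropp.
  pose proof (Rabs_triang w2 (- (xr n * w1))). rewrite Rabs_Ropp, Rabs_mult, (Rabs_pos_eq (xr n)) in H by lra.
  pose proof (Rabs_triang w1 (xr n * w2)). rewrite Rabs_mult, (Rabs_pos_eq (xr n)) in H0 by lra.
  set (A := Rabs (w2 - xr n * w1)) in *. set (B := Rabs (w1 + xr n * w2)) in *.
  assert (HA : A <= Rabs w2 + xr n * Rabs w1) by (unfold A, Rminus; exact H).
  pose proof (Rabs_pos w1). pose proof (Rabs_pos w2).
  assert (pp n * B <= pp n * (Rabs w1 + xr n * Rabs w2)) by (apply Rmult_le_compat_l; lra).
  apply (Rmult_le_reg_l (qq n)); [exact Hq|].
  replace (qq n * (KK n * Rabs w2 + (A / qq n + pp n * (B / qq n))))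
    with ((pp n * pp n - 1) * Rabs w2 + A + pp n * B) by (unfold KK; field; lra).
  assert (pp n + xr n = qq n) by (unfold pp, qq; ring).
  assert (pp n * (Rabs w1 + xr n * Rabs w2) = pp n * Rabs w1 + pp n * xr n * Rabs w2) by ring.
  nra.
Qed.

Lemma inv_lift (v : C) (K : R) (Phi : C -> R) : (forall w, K * Rabs (Im w) + Phi (Cmult w v) <= Phi w) ->
  forall w, K * Rabs (Im w) + (fun u => K * Rabs (Im u) + Phi (Cmult u v)) (Cmult w v)
            <= (fun u => K * Rabs (Im u) + Phi (Cmult u v)) w.
Proof. intros H w. cbv beta. pose proof (H (Cmult w v)). lra. Qed.

Lemma rsum_minus f g N : rsum f N - rsum g N = rsum (fun j => f j - g j) N.
Proof. induction N; simpl. ring. rewrite <- IHN. ring. Qed.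

Lemma min_idx (P : nat -> Prop) : (exists j, P j) -> exists j, P j /\ forall i, (i < j)%nat -> ~ P i.
Proof.
  intros [j Hj]. revert Hj. induction j as [j IH] using Wf_nat.lt_wf_ind. intros Hj.
  destruct (Classical_Prop.classic (exists i, (i < j)%nat /\ P i)) as [[i [Hi Pi]]|Hno].
  - exact (IH i Hi Pi).
  - exists j. split; [exact Hj|]. intros i Hi Pi. apply Hno. eauto.
Qed.

Lemma nth_bound (D : Z -> Prop) N ds : (0 <= N)%Z -> (forall x, D x -> (0 <= x <= N)%Z) -> List.Forall (diffset D) ds ->
  forall j, (Z.abs (nth j ds 0%Z) <= N)%Z.
Proof.
  intros HN HD HF j. destruct (Nat.lt_ge_cases j (length ds)) as [Hj|Hj].
  - pose proof (proj1 (Forall_nth _ _) HF j 0%Z Hj) as [a [b [Ha [Hb E]]]].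
    apply HD in Ha. apply HD in Hb. rewrite E. lia.
  - rewrite nth_overflow by exact Hj. lia.
Qed.

Lemma diff_bound n (a b : Z) : (Z.abs a <= Z.of_nat (n * n))%Z -> (Z.abs b <= Z.of_nat (n * n))%Z ->
  Rabs (IZR a - IZR b) <= 2 * (xr n * xr n).
Proof.
  intros Ha Hb. rewrite <- minus_IZR, <- abs_IZR.
  replace (2 * (xr n * xr n)) with (IZR (2 * Z.of_nat (n * n))).
  - apply IZR_le. lia.
  - rewrite mult_IZR, <- INR_IZR_INZ, mult_INR. unfold xr. simpl. ring.
Qed.

Theorem lemma4p8 (n : nat) (D : Z -> Prop) (k : nat) (ds ds' : list Z) :
  (2 <= n)%nat ->
  (forall x, D x -> (0 <= x <= Z.of_nat (n * n))%Z) ->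
  sparse n (diffset D) ->
  (1 <= k)%nat ->
  length ds = k -> length ds' = k ->
  List.Forall (diffset D) ds -> List.Forall (diffset D) ds' ->
  (exists j, (j < k)%nat /\ nth j ds 0%Z <> nth j ds' 0%Z) ->
  forall z : C, ~ (in_tile n ds z /\ in_tile n ds' z).
Proof.
  intros Hn HD Hsp Hk Hl Hl' HF HF' Hex z [Hz Hz'].
  destruct (min_idx _ Hex) as [j0 [[Hj0 Hne] Hmin]].
  assert (Hbelow : forall i, (i < j0)%nat -> nth i ds 0%Z = nth i ds' 0%Z).
  { intros i Hi. destruct (Z.eq_dec (nth i ds 0%Z) (nth i ds' 0%Z)) as [E|E]; [exact E|].
    exfalso. apply (Hmin i Hi). split; [lia|exact E]. }
  set (eps := fun j => IZR (nth j ds 0%Z) - IZR (nth j ds' 0%Z)).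
  set (G := 2 * (xr n * xr n)).
  assert (HG : 0 <= G) by (unfold G; pose proof (pos_INR n); unfold xr; nra).
  assert (Main : forall c Phi K, 0 < K -> (forall w, K * Rabs (Im w) + Phi (Cmult w (vv n)) <= Phi w) ->
     (forall w, 0 <= Phi w) -> K * (Rabs (eps j0) * Rabs (Im c)) <= G * Phi (Cmult c (vv n))).
  { intros c Phi K HK Hinv Hpos.
    set (Kc := Cmult c (Cpow (base n) (S j0))).
    destruct (tile_lim n ds z Kc Hz) as [d [Hd Hld]].
    destruct (tile_lim n ds' z Kc Hz') as [d' [Hd' Hld']].
    rewrite Hl in Hld. rewrite Hl' in Hld'.
    set (F := rsum (fun j => IZR (nth j ds 0%Z) * lam Kc (Cpow (vv n) (S j))) k) in *.
    set (F' := rsum (fun j => IZR (nth j ds' 0%Z) * lam Kc (Cpow (vv n) (S j))) k) in *.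
    assert (Hlim : is_lim_seq (fun N => rsum (fun l => (IZR (d' l) - IZR (d l)) * Im ((fun i => Cmult Kc (Cpow (vv n) i)) (S k + l)%nat)) (S N)) (F - F')).
    { replace (F - F') with ((lam Kc z - F') - (lam Kc z - F)) by ring.
      eapply is_lim_seq_ext; [|apply (is_lim_seq_minus' _ _ _ _ Hld' Hld)].
      intros N. cbv beta. rewrite rsum_minus. apply rsum_ext. intros l.
      replace (k + S l)%nat with (S k + l)%nat by lia. unfold lam. ring. }
    apply (core (vv n) Kc Phi K G HK HG Hinv Hpos c k j0 eps (fun l => IZR (d' l) - IZR (d l)) (F - F')).
    - cbv beta. unfold Kc.
      transitivity (Cmult c (Cpow (Cmult (base n) (vv n)) (S j0))).
      + rewrite Cpow_mult_l. ring.
      + unfold vv. rewrite Cinv_r by apply base_nz. rewrite Cpow_1_l. ring.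
    - lia.
    - intros j Hj. unfold eps. rewrite Hbelow by exact Hj. ring.
    - intros j. apply diff_bound; eapply nth_bound; eauto; lia.
    - intros l. apply diff_bound; [destruct (Hd' l)|destruct (Hd l)]; lia.
    - exact Hlim.
    - unfold F, F'. rewrite rsum_minus. apply rsum_ext. intros j. unfold eps, lam. ring. }
  assert (Hdiff : forall j, (j < k)%nat -> diffset D (nth j ds 0%Z) /\ diffset D (nth j ds' 0%Z)).
  { intros j Hj. split; apply (proj1 (Forall_nth _ _)); auto; lia. }
  destruct (Hdiff j0 Hj0) as [Da Db].
  destruct (Hsp _ _ Da Db Hne) as [S5 S24].
  assert (Eeps : Rabs (eps j0) = IZR (Z.abs (nth j0 ds 0%Z - nth j0 ds' 0%Z))).
  { unfold eps. rewrite abs_IZR, minus_IZR. reflexivity. }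
  assert (Hx : 2 <= xr n) by (apply le_INR in Hn; exact Hn).
  assert (Hq : 0 < qq n) by (unfold qq; nra).
  assert (HKq : KK n * qq n = pp n * pp n - 1) by (unfold KK; field; lra).
  assert (Hp3 : 3 <= pp n) by (unfold pp; nra).
  assert (HK : 0 < KK n) by (unfold KK; apply Rdiv_lt_0_compat; nra).
  assert (Hn1 : (1 <= n)%nat) by lia.
  destruct (Nat.eq_dec n 2) as [E2|N2].
  -
    assert (Hlow : 4 <= Rabs (eps j0)).
    { rewrite Eeps. apply IZR_le. assert (T24 := S24 ltac:(lia)). lia. }
    assert (Hp1 : forall w, 0 <= Phi1 n w).
    { intros w. unfold Phi1. pose proof (Rabs_pos (fst w)). pose proof (Rabs_pos (snd w)). nra. }
    assert (Phi1_1 : Phi1 n (RtoC 1) = 1) by (unfold Phi1, RtoC; simpl; rewrite Rabs_R1, Rabs_R0; ring).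
    pose proof (Main (Cmult (base n) (base n)) (fun u => KK n * Rabs (Im u) + Phi1 n (Cmult u (vv n))) (KK n) HK
       (inv_lift _ _ _ (inv1 n Hn1))
       (fun u => Rplus_le_le_0_compat _ _ (Rmult_le_pos _ _ (Rlt_le _ _ HK) (Rabs_pos _)) (Hp1 _))) as M.
    cbv beta in M.
    assert (Hbv : Cmult (base n) (vv n) = RtoC 1) by (unfold vv; apply Cinv_r, base_nz).
    replace (Cmult (Cmult (base n) (base n)) (vv n)) with (base n) in M
      by (rewrite <- Cmult_assoc, Hbv; ring).
    rewrite Hbv, Phi1_1 in M.
    assert (Hx2 : xr n = 2) by (rewrite E2; unfold xr; simpl; ring).
    assert (HIm : Im (Cmult (base n) (base n)) = -4) by (unfold Im, Cmult, base; simpl; fold (xr n); rewrite Hx2; ring).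
    assert (HImb : Im (base n) = 1) by reflexivity.
    rewrite HIm, HImb in M.
    rewrite Rabs_R1 in M. replace (Rabs (-4)) with 4 in M by (rewrite Rabs_left; lra).
    assert (HKv : KK n = 8 / 5) by (unfold KK, pp, qq; rewrite Hx2; field).
    assert (M' := M).
    unfold G in M'. rewrite Hx2, HKv in M'. lra.
  - assert (Hp1 : forall w, 0 <= Phi1 n w).
    { intros w. unfold Phi1. pose proof (Rabs_pos (fst w)). pose proof (Rabs_pos (snd w)). nra. }
    assert (Phi1_1 : Phi1 n (RtoC 1) = 1) by (unfold Phi1, RtoC; simpl; rewrite Rabs_R1, Rabs_R0; ring).
    pose proof (Main (base n) (Phi1 n) (KK n) HK (inv1 n Hn1) Hp1) as M.
    assert (Hbv : Cmult (base n) (vv n) = RtoC 1) by (unfold vv; apply Cinv_r, base_nz).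
    rewrite Hbv, Phi1_1 in M.
    assert (HImb : Im (base n) = 1) by reflexivity.
    rewrite HImb, Rabs_R1 in M.
    assert (M' : KK n * Rabs (eps j0) <= G) by lra.
    assert (M'' : (pp n * pp n - 1) * Rabs (eps j0) <= G * qq n).
    { rewrite <- HKq. apply (Rmult_le_compat_r (qq n)) in M'; [|lra]. lra. }
    unfold G, pp, qq in M''. unfold pp in Hp3.
    destruct (le_lt_dec 5 n) as [H5|H5].
    + assert (Hlow : 3 <= Rabs (eps j0)) by (rewrite Eeps; apply IZR_le; specialize (S5 H5); lia).
      assert (Hx5 : 5 <= xr n) by (apply le_INR in H5; replace (INR 5) with 5 in H5 by (simpl; ring); exact H5).
      set (x := xr n) in *. set (e := Rabs (eps j0)) in *.
      assert (0 <= (x*x - x + 1) * (x*x - x + 1) - 1) by nra.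
      assert (((x*x - x + 1) * (x*x - x + 1) - 1) * 3 <= ((x*x - x + 1) * (x*x - x + 1) - 1) * e) by (apply Rmult_le_compat_l; lra).
      assert (0 < x * ((x - 5) * (x * x - x + 2) + 4)).
      { apply Rmult_lt_0_compat; [lra|]. assert (0 <= (x - 5) * (x * x - x + 2)) by (apply Rmult_le_pos; nra). lra. }
      nra.
    + assert (Hlow : 4 <= Rabs (eps j0)) by (rewrite Eeps; apply IZR_le; specialize (S24 ltac:(lia)); lia).
      assert (Hx3 : 3 <= xr n) by (assert (H3 : (3 <= n)%nat) by lia; apply le_INR in H3; replace (INR 3) with 3 in H3 by (simpl; ring); exact H3).
      set (x := xr n) in *. set (e := Rabs (eps j0)) in *.
      assert (0 <= (x*x - x + 1) * (x*x - x + 1) - 1) by nra.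
      assert (((x*x - x + 1) * (x*x - x + 1) - 1) * 4 <= ((x*x - x + 1) * (x*x - x + 1) - 1) * e) by (apply Rmult_le_compat_l; lra).
      assert (0 < x * ((x - 3) * (x * x - x + 2) + 2)).
      { apply Rmult_lt_0_compat; [lra|]. assert (0 <= (x - 3) * (x * x - x + 2)) by (apply Rmult_le_pos; nra). lra. }
      nra.
Qed.
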